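(* Let $L$ be a distributive lattice. The relation $\le$ on positive simple functions over $L$ is transitive: if $\sum_ir_ia_i\le\sum_js_jb_j$ and $\sum_js_jb_j\le\sum_kt_kc_k$, then $\sum_ir_ia_i\le\sum_kt_kc_k$.
   Context: A positive simple function over a distributive lattice $L$ is a formal finite sum $\sum_i r_ix_i$ with rationals $r_i\ge0$ and $x_i\in L$. For a finite index set $I$, $x_I:=\bigwedge_{i\in I}x_i$ ($x_\emptyset=1$) and $r_I:=\sum_{i\in I}r_i$ ($r_\emptyset=0$). Define $\sum_ir_ix_i\le\sum_js_jy_j$ iff for every finite index set $I$, $x_I\le\bigvee\{y_J: J\text{ a finite index set with } r_I\le s_J\}$. *)

(* Defs.v *)
From HB Require Import structures.
From mathcomp Require Import all_boot all_order all_algebra.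
Set Implicit Arguments. Unset Strict Implicit. Unset Printing Implicit Defensive.
Import Order.TTheory GRing.Theory Num.Theory.

(* A positive simple function sum_{i<n} r_i x_i over a bounded distributive
   lattice L is represented by its length n, coefficients r : 'I_n -> rat
   (assumed >= 0 in statements) and elements x : 'I_n -> L.
   For I a set of indices: x_I = \meet_(i in I) x i (empty meet = top = 1),
   r_I = \sum_(i in I) r i (empty sum = 0). *)
Definition psf_le (d : Order.disp_t) (L : tbDistrLatticeType d) (n m : nat)
  (r : 'I_n -> rat) (x : 'I_n -> L) (s : 'I_m -> rat) (y : 'I_m -> L) : Prop :=
  forall I : {set 'I_n},
    (\meet_(i in I) x i <=
       \join_(J : {set 'I_m} | ((\sum_(i in I) r i) <= (\sum_(j in J) s j))%R)
          \meet_(j in J) y j)%O.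

(* Main.v *)
Require Import Defs.
From HB Require Import structures.
From mathcomp Require Import all_boot all_order all_algebra.
Import Order.TTheory GRing.Theory Num.Theory.

Theorem lemma4p4 (d : Order.disp_t) (L : tbDistrLatticeType d) (n m p : nat)
  (r : 'I_n -> rat) (a : 'I_n -> L)
  (s : 'I_m -> rat) (b : 'I_m -> L)
  (t : 'I_p -> rat) (c : 'I_p -> L) :
  (forall i, (0 <= r i)%R) -> (forall j, (0 <= s j)%R) -> (forall k, (0 <= t k)%R) ->
  psf_le r a s b -> psf_le s b t c -> psf_le r a t c.
Proof.
move=> _ _ _ H1 H2 I.
apply: (le_trans (H1 I)).
apply/joinsP => J HJ.
apply: (le_trans (H2 J)).
apply/joinsP => K HK.
apply: joins_sup.
exact: (le_trans HJ HK).
Qed.
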